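(* For CC-MAR, the price of stability is 1; that is, in every instance there is a Nash equilibrium whose total cost equals the minimum total cost over all strategy profiles (in fact every minimum-total-cost strategy profile is a Nash equilibrium).
   Context: A mixed graph $G=(V,E,A)$ has undirected edges $E\subseteq\binom{V}{2}$ with positive integer weights $w_e$ and arcs $A\subseteq V\times V$. A path is a sequence of pairwise distinct vertices in which consecutive vertices are joined by an edge or by an arc in the forward direction. A CC-MAR instance is $(G,\mathcal{T})$ with $\mathcal{T}$ a multiset of $k$ pairs $(s_i,t_i)$, each connected by some path. A strategy profile $\mathcal{P}=\{P_1,\dots,P_k\}$ consists of $s_i$-$t_i$ paths. For $\{u,v\}\in E$, $x_{uv}$ is the number of paths traversing it from $u$ to $v$. Agent $i$'s cost is $\sum w_{uv}x_{vu}$ over edges $\{u,v\}$ traversed by $P_i$ from $u$ to $v$; total cost is $\mathrm{cost}(\mathcal{P})=\sum_{\{u,v\}\in E}w_{uv}x_{uv}x_{vu}$. A Nash equilibrium is a profile where no agent can strictly lower its own cost by unilaterally changing its path. The price of stability is the ratio of the minimum total cost of a Nash equilibrium to the minimum total cost of any profile. *)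

(* Defs.v *)
From mathcomp Require Import all_boot all_order.
Set Implicit Arguments. Unset Strict Implicit. Unset Printing Implicit Defensive.

(* A mixed graph on the finite vertex type V:
   - E : {set {set V}}  the undirected edges (each a 2-element set {u,v}),
   - w : {set V} -> nat the edge weights (positive on E),
   - A : {set V * V}    the arcs (u,v), traversable only from u to v.

   A path from s is given by its start vertex s and a list of steps; a step
   (v, b) moves from the current vertex u to v, through the edge {u,v}
   if b = true and through the arc (u,v) if b = false.  (Recording which
   kind of connection is used disambiguates the case where a pair is joined
   both by an edge and an arc.) *)

Section MixedGraph.
Variable V : finType.
Variable E : {set {set V}}.
Variable w : {set V} -> nat.
Variable A : {set V * V}.

Definition step_ok (u : V) (st : V * bool) : bool :=
  if st.2 then [set u; st.1] \in E else (u, st.1) \in A.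

Fixpoint steps_ok (u : V) (p : seq (V * bool)) : bool :=
  match p with
  | [::] => true
  | st :: p' => step_ok u st && steps_ok st.1 p'
  end.

Definition is_path (s t : V) (p : seq (V * bool)) : bool :=
  [&& steps_ok s p, uniq (s :: map fst p) & last s (map fst p) == t].

Fixpoint edge_trav (u : V) (p : seq (V * bool)) : seq (V * V) :=
  match p with
  | [::] => [::]
  | st :: p' => (if st.2 then [:: (u, st.1)] else [::]) ++ edge_trav st.1 p'
  end.

Variable k : nat.
Variable T : 'I_k -> V * V.

Definition profile := 'I_k -> seq (V * bool).

Definition valid_profile (P : profile) : Prop :=
  forall i, is_path (T i).1 (T i).2 (P i).

Definition x (P : profile) (u v : V) : nat :=
  \sum_(i < k) ((u, v) \in edge_trav (T i).1 (P i)).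

Definition agent_cost (P : profile) (i : 'I_k) : nat :=
  \sum_(e <- edge_trav (T i).1 (P i)) w [set e.1; e.2] * x P e.2 e.1.

Definition total_cost (P : profile) : nat :=
  \sum_(u : V) \sum_(v : V | (enum_rank u < enum_rank v)%N && ([set u; v] \in E))
     w [set u; v] * x P u v * x P v u.

Definition deviate (P : profile) (i : 'I_k) (p : seq (V * bool)) : profile :=
  fun j => if j == i then p else P j.

Definition nash_equilibrium (P : profile) : Prop :=
  valid_profile P /\
  forall (i : 'I_k) (p : seq (V * bool)), is_path (T i).1 (T i).2 p ->
    (agent_cost P i <= agent_cost (deviate P i p) i)%N.

Definition optimal_profile (P : profile) : Prop :=
  valid_profile P /\
  forall Q : profile, valid_profile Q -> (total_cost P <= total_cost Q)%N.

End MixedGraph.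

(* Main.v *)
Require Import Defs.
From mathcomp Require Import all_boot all_order.
From mathcomp Require Import zify.
From Stdlib Require Import Classical.
Set Implicit Arguments. Unset Strict Implicit. Unset Printing Implicit Defensive.

Lemma trav_snd (V : finType) (s : V) p u v :
  (u, v) \in edge_trav s p -> v \in map fst p.
Proof.
elim: p s => [|[v1 b] p IH] s //=.
rewrite mem_cat => /orP[].
  by case: b => //=; rewrite inE => /eqP [_ ->]; rewrite inE eqxx.
by move/IH => H; rewrite inE H orbT.
Qed.

Lemma trav_E (V : finType) E A (s : V) p u v :
  steps_ok E A s p -> (u, v) \in edge_trav s p -> [set u; v] \in E.
Proof.
elim: p s => [|[v1 b] p IH] s //=.
rewrite /step_ok /= => /andP[Hst Hok].
rewrite mem_cat => /orP[]; last exact: IH.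
by case: b Hst => //= Hst; rewrite inE => /eqP [-> ->].
Qed.

Lemma trav_uniq (V : finType) (s : V) p :
  uniq (s :: map fst p) -> uniq (edge_trav s p).
Proof.
elim: p s => [|[v1 b] p IH] s //=.
move=> /andP[Hs /andP[Hv1 Hu]].
rewrite cat_uniq IH /= ?Hv1 ?Hu // ?andbT.
case: b => //=; rewrite ?andbT.
apply/hasPn => e He; rewrite inE; apply/negP => /eqP Hee; subst e.
by move: (trav_snd He); rewrite (negbTE Hv1).
by apply/hasPn => e He; rewrite in_nil.
Qed.

Lemma trav_anti (V : finType) (s : V) p u v :
  uniq (s :: map fst p) -> (u, v) \in edge_trav s p ->
  (v, u) \in edge_trav s p -> False.
Proof.
elim: p s => [|[v1 b] p IH] s //=.
move=> /andP[Hs Hu'].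
have Hsn : s \notin map fst p by move: Hs; rewrite inE negb_or => /andP[].
have Hsv : s != v1 by move: Hs; rewrite inE negb_or => /andP[].
rewrite !mem_cat.
case: b => /=; last by move=> H1 H2; exact: IH Hu' H1 H2.
rewrite !inE.
case/orP=> [/eqP[-> ->]|H1]; case/orP=> [/eqP[E1 E2]|H2].
- by rewrite E1 eqxx in Hsv.
- by move: (trav_snd H2); rewrite (negbTE Hsn).
- move: H1; rewrite E1 E2 => H1.
  by move: (trav_snd H1); rewrite (negbTE Hsn).
- exact: IH Hu' H1 H2.
Qed.

Definition av (V : finType) k (T : 'I_k -> V * V) (P : profile V k) i u v : nat :=
  (u, v) \in edge_trav (T i).1 (P i).
Definition yv (V : finType) k (T : 'I_k -> V * V) (P : profile V k) i u v : nat :=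
  \sum_(j < k | j != i) ((u, v) \in edge_trav (T j).1 (P j)).

Lemma x_split (V : finType) k (T : 'I_k -> V * V) (P : profile V k) i u v :
  x T P u v = av T P i u v + yv T P i u v.
Proof. by rewrite /x (bigD1 i). Qed.

Lemma split_sum (V : finType) (F : V -> V -> nat) : (forall u, F u u = 0) ->
  \sum_u \sum_v F u v =
  \sum_u \sum_(v | (enum_rank u < enum_rank v)%N) (F u v + F v u).
Proof.
move=> F0.
have H1 u : \sum_v F u v = \sum_(v | (enum_rank u < enum_rank v)%N) F u v
     + \sum_(v | (enum_rank v < enum_rank u)%N) F u v.
  rewrite (bigID (fun v => (enum_rank u < enum_rank v)%N)) /=; congr (_ + _).
  rewrite big_mkcond [RHS]big_mkcond; apply: eq_bigr => v _.
  case: (ltngtP (enum_rank u) (enum_rank v)) => h //=.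
  have /enum_rank_inj -> : enum_rank u = enum_rank v by apply: val_inj.
  by rewrite F0.
rewrite (eq_bigr _ (fun u _ => H1 u)) big_split /=.
rewrite [X in _ + X](exchange_big_dep predT) //=.
rewrite -big_split /=; apply: eq_bigr => u _.
by rewrite big_split.
Qed.

Lemma agent_eq (V : finType) (E : {set {set V}}) (w : {set V} -> nat) (A : {set V * V}) k (T : 'I_k -> V * V) (P : profile V k) i :
  is_path E A (T i).1 (T i).2 (P i) ->
  agent_cost w T P i =
  \sum_u \sum_v av T P i u v * (w [set u; v] * yv T P i v u).
Proof.
case/and3P=> Hok Hu _.
rewrite /agent_cost big_uniq; last exact: trav_uniq.
rewrite big_mkcond /= [RHS]pair_big /=.
apply: eq_bigr => -[u v] _ /=.
rewrite /av; case: ifP => H; last by rewrite mul0n.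
rewrite mul1n (x_split _ _ i) /av.
case: ((v, u) \in _) /idP => H' //; exfalso; exact: trav_anti Hu H H'.
Qed.

Lemma total_eq (V : finType) (E : {set {set V}}) (w : {set V} -> nat) (A : {set V * V}) k (T : 'I_k -> V * V) (P : profile V k) i :
  (forall e, e \in E -> #|e| = 2) ->
  is_path E A (T i).1 (T i).2 (P i) ->
  total_cost E w T P =
  \sum_(u : V) \sum_(v : V | (enum_rank u < enum_rank v)%N && ([set u; v] \in E))
     w [set u; v] * yv T P i u v * yv T P i v u + agent_cost w T P i.
Proof.
move=> HE Hp.
rewrite (agent_eq w Hp).
have Hp' := Hp; case/and3P: Hp' => Hok Hu _.
rewrite split_sum; last first.
  move=> u; rewrite /av; case: ((u, u) \in _) /idP => // H.
  by move: (HE _ (trav_E Hok H)); rewrite setUid cards1.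
rewrite -big_split /=; rewrite /total_cost; apply: eq_bigr => u _.
rewrite big_mkcond [X in _ = X + _]big_mkcond [X in _ = _ + X]big_mkcond -big_split /=.
apply: eq_bigr => v _.
case: (enum_rank u < enum_rank v)%N => //=.
case: ifP => HEuv; last first.
  rewrite /av.
  case: ((u, v) \in _) /idP => [H|_]; first by rewrite (trav_E Hok H) in HEuv.
  case: ((v, u) \in _) /idP => [H|_]; first by rewrite setUC (trav_E Hok H) in HEuv.
  by rewrite !mul0n.
rewrite (x_split _ _ i u v) (x_split _ _ i v u) [[set v; u]]setUC /av.
case: ((u, v) \in _) /idP => H1; case: ((v, u) \in _) /idP => H2.
- exfalso; exact: trav_anti Hu H1 H2.
- by rewrite /=; nia.
- by rewrite /=; nia.
- by rewrite /=; nia.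
Qed.

Theorem mainTheorem2
  (V : finType) (E : {set {set V}}) (w : {set V} -> nat) (A : {set V * V})
  (k : nat) (T : 'I_k -> V * V)
  (HE : forall e, e \in E -> #|e| = 2)
  (Hw : forall e, e \in E -> (0 < w e)%N)
  (Hconn : forall i : 'I_k, exists p, is_path E A (T i).1 (T i).2 p) :
  (exists P : profile V k,
      optimal_profile E w A T P /\ nash_equilibrium E w A T P) /\
  (forall P : profile V k,
      optimal_profile E w A T P -> nash_equilibrium E w A T P).
Proof.
have part2 : forall P : profile V k,
    optimal_profile E w A T P -> nash_equilibrium E w A T P.
  move=> P [HvP Hopt]; split => // i p Hp.
  have Hv' : valid_profile E A T (deviate P i p).
    by move=> j; rewrite /deviate; case: eqP => [->|].
  have := Hopt _ Hv'.
  rewrite (@total_eq _ _ w _ _ _ _ i HE (HvP i)).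
  have Hpi : is_path E A (T i).1 (T i).2 (deviate P i p i).
    by rewrite /deviate eqxx.
  rewrite (@total_eq _ _ w _ _ _ _ i HE Hpi).
  have Hy : forall u v, yv T (deviate P i p) i u v = yv T P i u v.
    move=> u v; rewrite /yv; apply: eq_bigr => j /negbTE Hj.
    by rewrite /deviate Hj.
  have -> : \sum_(u : V) \sum_(v : V | (enum_rank u < enum_rank v)%N && ([set u; v] \in E))
        w [set u; v] * yv T (deviate P i p) i u v * yv T (deviate P i p) i v u =
     \sum_(u : V) \sum_(v : V | (enum_rank u < enum_rank v)%N && ([set u; v] \in E))
        w [set u; v] * yv T P i u v * yv T P i v u.
    by apply: eq_bigr => u _; apply: eq_bigr => v _; rewrite !Hy.
  by rewrite leq_add2l.
split => //.
pose P0 : profile V k := fun i => xchoose (Hconn i).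
have HP0 : valid_profile E A T P0 by move=> i; exact: xchooseP (Hconn i).
suff [P HP] : exists P, optimal_profile E w A T P by exists P; split => //; exact: part2.
have : forall n (Q : profile V k), valid_profile E A T Q -> (total_cost E w T Q <= n)%N ->
  exists P, optimal_profile E w A T P.
  elim=> [|n IH] Q HQ Hn.
    exists Q; split => // R _; move: Hn; rewrite leqn0 => /eqP ->; exact: leq0n.
  case: (classic (exists R, valid_profile E A T R /\ (total_cost E w T R < total_cost E w T Q)%N)).
    case=> R [HR HRQ]; apply: (IH R HR).
    by rewrite -ltnS; apply: leq_trans HRQ Hn.
  move=> Hno; exists Q; split => // R HR.
  rewrite leqNgt; apply/negP => HRQ; apply: Hno; exists R; split => //.
by move=> /(_ _ P0 HP0 (leqnn _)).
Qed.
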